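(* For integers $M,N,m,l$ with $1\leq m\leq l<N$ and $M-m\geq N-l\geq 1$, the polynomial \[ {M\brack m}{N\brack l}-{M\brack m-1}{N\brack l+1} \] has nonnegative coefficients as a polynomial in $q$.
   Context: ${n\brack m}=\prod_{i=0}^{m-1}\frac{1-q^{n-i}}{1-q^{m-i}}$ denotes the Gaussian polynomial ($q$-binomial coefficient) for integers $n\ge m\ge0$. *)

(* Defs.v *)
From mathcomp Require Import all_boot all_order all_algebra.
Set Implicit Arguments. Unset Strict Implicit. Unset Printing Implicit Defensive.
Import GRing.Theory Num.Theory.
Local Open Scope ring_scope.

(* Gaussian polynomial [n brack m] = prod_{i<m} (1 - q^(n-i)) / (1 - q^(m-i)),
   computed in {poly rat} as the exact polynomial quotient of the numerator
   product by the denominator product (the division is exact for n >= m >= 0). *)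
Definition gauss_num (n m : nat) : {poly rat} :=
  \prod_(i < m) (1 - 'X^(n - i)).
Definition gauss_den (m : nat) : {poly rat} :=
  \prod_(i < m) (1 - 'X^(m - i)).
Definition gauss (n m : nat) : {poly rat} := gauss_num n m %/ gauss_den m.

(* Main.v *)
Require Import Defs.
From mathcomp Require Import all_boot all_order all_algebra.
From mathcomp Require Import ring zify.
Import GRing.Theory Num.Theory.
Local Open Scope ring_scope.

Lemma idP1 (R : comNzRingType) (g a b : R) :
  g * (1 - a) + a * (g * (1 - b)) = (1 - a * b) * g.
Proof. ring. Qed.

Lemma idP2 (R : comNzRingType) (a b h d : R) :
  a * h * ((1 - b) * d) = a * (1 - b) * (h * d).
Proof. ring. Qed.
Lemma idP3 (R : comNzRingType) (g a b : R) :
  (1 - a * b) * g = g * (1 - a) + a * (1 - b) * g.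
Proof. ring. Qed.

Fixpoint gb (n k : nat) : {poly rat} :=
  match n, k with
  | _, 0 => 1
  | 0, _.+1 => 0
  | n1.+1, k1.+1 => gb n1 k1 + 'X^(k1.+1) * gb n1 k1.+1
  end.

Lemma gb_n0 n : gb n 0 = 1. Proof. by case: n. Qed.
Lemma gb0S k : gb 0 k.+1 = 0. Proof. by []. Qed.
Lemma gbSS n k : gb n.+1 k.+1 = gb n k + 'X^(k.+1) * gb n k.+1. Proof. by []. Qed.

Lemma gb_gt n k : (n < k)%N -> gb n k = 0.
Proof.
elim: n k => [|n IH] [|k] //= H.
by rewrite !IH ?mulr0 ?addr0 //; apply: ltnW.
Qed.

Lemma num_gt n k : (n < k)%N -> gauss_num n k = 0.
Proof.
move=> H; rewrite /gauss_num (bigD1 (Ordinal H)) //= subnn expr0 subrr.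
by rewrite mul0r.
Qed.

Lemma num_S n k : gauss_num n.+1 k.+1 = (1 - 'X^(n.+1)) * gauss_num n k.
Proof. by rewrite /gauss_num big_ord_recl subn0. Qed.

Lemma num_Sr n k : gauss_num n k.+1 = gauss_num n k * (1 - 'X^(n - k)).
Proof. by rewrite /gauss_num big_ord_recr. Qed.

Lemma den_S k : gauss_den k.+1 = (1 - 'X^(k.+1)) * gauss_den k.
Proof. by rewrite /gauss_den big_ord_recl subn0. Qed.

Lemma oneX_neq0 j : (1 - 'X^(j.+1) : {poly rat}) != 0.
Proof.
apply/eqP => H; have := congr1 (horner^~ 0) H.
rewrite !hornerE expr0n /= subr0 => /eqP; by rewrite oner_eq0.
Qed.

Lemma den_neq0 k : gauss_den k != 0.
Proof.
elim: k => [|k IH]; first by rewrite /gauss_den big_ord0 oner_eq0.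
by rewrite den_S mulf_neq0 // oneX_neq0.
Qed.

Lemma gb_prod n k : gb n k * gauss_den k = gauss_num n k.
Proof.
elim: n k => [|n IH] [|k].
- by rewrite /gauss_den /gauss_num !big_ord0 mulr1.
- by rewrite gb0S mul0r num_gt.
- by rewrite /gauss_den /gauss_num !big_ord0 mulr1.
rewrite gbSS den_S num_S mulrDl.
have -> : gb n k * ((1 - 'X^(k.+1)) * gauss_den k) = gauss_num n k * (1 - 'X^(k.+1)).
  by rewrite mulrCA IH mulrC.
rewrite -mulrA -den_S IH num_Sr.
case: (leqP k n) => Hkn.
  have E : ('X^(k.+1) * 'X^(n - k) : {poly rat}) = 'X^(n.+1).
    by rewrite -exprD; congr (_ ^+ _); lia.
  by rewrite idP1 E.
by rewrite num_gt // !(mul0r, mulr0, add0r).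
Qed.

Lemma gauss_gb n k : gauss n k = gb n k.
Proof. by rewrite /gauss -gb_prod mulpK // den_neq0. Qed.

Lemma gbS1 n k : gb n.+1 k.+1 = gb n k.+1 + 'X^(n - k) * gb n k.
Proof.
apply: (mulIf (den_neq0 k.+1)).
change (gb n.+1 k.+1 * gauss_den k.+1 = (gb n k.+1 + 'X^(n - k) * gb n k) * gauss_den k.+1).
rewrite gb_prod mulrDl gb_prod num_S num_Sr den_S.
rewrite idP2 gb_prod.
case: (leqP k n) => Hkn.
  have E : ('X^(n - k) * 'X^(k.+1) : {poly rat}) = 'X^(n.+1).
    by rewrite -exprD; congr (_ ^+ _); lia.
  by rewrite -E idP3.
by rewrite num_gt // !(mul0r, mulr0, addr0).
Qed.

Definition pos (p : {poly rat}) := forall i, 0 <= p`_i.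

Lemma pos0 : pos 0. Proof. by move=> i; rewrite coef0. Qed.
Lemma pos1 : pos 1. Proof. by move=> i; rewrite coef1 ler0n. Qed.
Lemma posD p q : pos p -> pos q -> pos (p + q).
Proof. by move=> Hp Hq i; rewrite coefD addr_ge0. Qed.
Lemma posM p q : pos p -> pos q -> pos (p * q).
Proof.
move=> Hp Hq i; rewrite coefM; apply: sumr_ge0 => j _; exact: mulr_ge0.
Qed.
Lemma posX j p : pos p -> pos ('X^j * p).
Proof. by move=> Hp i; rewrite coefXnM; case: ifP. Qed.

Lemma gb_pos n k : pos (gb n k).
Proof.
elim: n k => [|n IH] [|k]; rewrite ?gb_n0; try exact: pos1.
  exact: pos0.
by rewrite gbSS; apply: posD => //; apply: posX.
Qed.

Definition F e M k N l := gb M k.+1 * gb N l - 'X^e * (gb M k * gb N l.+1).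

Section Ids.
Variable R : comNzRingType.

Lemma idA (x a0 a1 a2 n0 n1 : R) e k :
  (a0 + x ^+ k.+2 * a1) * n0 - x ^+ e.+1 * ((a2 + x ^+ k.+1 * a0) * n1)
  = (a0 * n0 - x ^+ e.+1 * (a2 * n1)) + x ^+ k.+2 * (a1 * n0 - x ^+ e * (a0 * n1)).
Proof. rewrite ?exprS ?expr0; ring. Qed.

Lemma idA0 (x g n0 n1 : R) e :
  (1 + x ^+ 1 * g) * n0 - x ^+ e.+1 * (1 * n1)
  = n0 + x ^+ 1 * (g * n0 - x ^+ e * (1 * n1)).
Proof. rewrite ?exprS ?expr0; ring. Qed.

Lemma idB (x A0 A1 b0 b1 b2 : R) e d :
  A1 * (b1 + x ^+ d.+1 * b0) - x ^+ e.+1 * (A0 * (b2 + x ^+ d * b1))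
  = (A1 * b1 - x ^+ e.+1 * (A0 * b2)) + x ^+ d.+1 * (A1 * b0 - x ^+ e * (A0 * b1)).
Proof. rewrite ?exprS ?expr0; ring. Qed.

Lemma idC (x A0 A1 b0 b1 b2 : R) l :
  A1 * (b0 + x ^+ l.+1 * b1) - x ^+ 0 * (A0 * (b1 + x ^+ l.+2 * b2))
  = (A1 * b0 - x ^+ 0 * (A0 * b1)) + x ^+ l.+1 * (A1 * b1 - x ^+ 1 * (A0 * b2)).
Proof. rewrite ?exprS ?expr0; ring. Qed.

Lemma idD (x a0 a1 a2 n0 n1 : R) d :
  (a1 + x ^+ d * a0) * n0 - x ^+ 0 * ((a0 + x ^+ d.+1 * a2) * n1)
  = (a1 * n0 - x ^+ 0 * (a0 * n1)) + x ^+ d * (a0 * n0 - x ^+ 1 * (a2 * n1)).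
Proof. rewrite ?exprS ?expr0; ring. Qed.

Lemma idD0 (x g n1 : R) m :
  (g + x ^+ m * 1) * 1 - x ^+ 0 * (1 * n1)
  = (g * 1 - x ^+ 0 * (1 * n1)) + x ^+ m * 1.
Proof. rewrite ?exprS ?expr0; ring. Qed.
End Ids.

Lemma main s : forall M N k l e, (M + N <= s)%N -> (k <= l)%N ->
  (N + k <= M + l)%N -> (e + N + 2 * k <= M + 2 * l)%N -> pos (F e M k N l).
Proof.
elim: s => [|s IH] M N k l e Hs Hx Hy He.
  case: (ltngtP N l) => [HNl|HlN|HNl].
  - have H2 : (N < l.+1)%N by lia.
    rewrite /F (gb_gt _ _ HNl) (gb_gt _ _ H2) !mulr0 subr0; exact: pos0.
  - lia.
  - have H2 : (N < N.+1)%N by lia.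
    rewrite /F -HNl (gb_gt _ _ H2) !mulr0 subr0; apply: posM; exact: gb_pos.
case: (ltngtP N l) => [HNl|HlN|HNl].
- have H2 : (N < l.+1)%N by lia.
  rewrite /F (gb_gt _ _ HNl) (gb_gt _ _ H2) !mulr0 subr0; exact: pos0.
- case: e He => [|e] He.
  + case: (ltnP k l) => Hkl.
    * case: N Hs Hy He HlN => [|N'] Hs Hy He HlN; first lia.
      case: l Hx Hy He HlN Hkl => [|l'] Hx Hy He HlN Hkl; first lia.
      have -> : F 0 M k N'.+1 l'.+1 = F 0 M k N' l' + 'X^(l'.+1) * F 1 M k N' l'.+1.
        by rewrite /F !gbSS idC.
      apply: posD; [apply: IH | apply: posX; apply: IH]; lia.
    * have Ekl : k = l by lia.
      subst l.
      case: (ltnP (N + k) (M + k)) => Hy2.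
      -- case: M Hs Hy He Hy2 => [|M'] Hs Hy He Hy2; first lia.
         case: k Hx Hy He Hy2 Hkl HlN => [|k'] Hx Hy He Hy2 Hkl HlN.
         ++ have -> : F 0 M'.+1 0 N 0 = F 0 M' 0 N 0 + 'X^M' * 1.
              by rewrite /F gbS1 !gb_n0 subn0 idD0.
            apply: posD; [apply: IH; lia | apply: posX; exact: pos1].
         ++ have [d Hd1 Hd2] : exists2 d, (M' - k'.+1 = d)%N & (M' - k' = d.+1)%N.
              by exists (M' - k'.+1)%N; lia.
            have -> : F 0 M'.+1 k'.+1 N k'.+1 = F 0 M' k'.+1 N k'.+1 + 'X^d * F 1 M' k' N k'.+1.
              by rewrite /F !gbS1 Hd1 Hd2 idD.
            apply: posD; [apply: IH | apply: posX; apply: IH]; lia.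
      -- have EN : N = M by lia.
         subst N.
         rewrite /F expr0 mul1r [gb M k * _]mulrC subrr; exact: pos0.
  + case: (ltnP (N + k) (M + l)) => Hy2.
    * case: M Hs Hy He Hy2 => [|M'] Hs Hy He Hy2; first lia.
      case: k Hx Hy He Hy2 => [|k'] Hx Hy He Hy2.
      -- have -> : F e.+1 M'.+1 0 N l = gb N l + 'X^1 * F e M' 0 N l.
           by rewrite /F gbSS !gb_n0 idA0.
         apply: posD; [exact: gb_pos | apply: posX; apply: IH; lia].
      -- have -> : F e.+1 M'.+1 k'.+1 N l = F e.+1 M' k' N l + 'X^(k'.+2) * F e M' k'.+1 N l.
           by rewrite /F !gbSS idA.
         apply: posD; [apply: IH | apply: posX; apply: IH]; lia.
    * have Hkl : (k < l)%N by lia.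
      case: N Hs Hy He HlN Hy2 => [|N'] Hs Hy He HlN Hy2; first lia.
      case: l Hx Hy He HlN Hkl Hy2 => [|l'] Hx Hy He HlN Hkl Hy2; first lia.
      have [d Hd1 Hd2] : exists2 d, (N' - l'.+1 = d)%N & (N' - l' = d.+1)%N.
        by exists (N' - l'.+1)%N; lia.
      have -> : F e.+1 M k N'.+1 l'.+1 = F e.+1 M k N' l'.+1 + 'X^(d.+1) * F e M k N' l'.
        by rewrite /F !gbS1 Hd1 Hd2 idB.
      apply: posD; [apply: IH | apply: posX; apply: IH]; lia.
- have H2 : (N < N.+1)%N by lia.
  rewrite /F -HNl (gb_gt _ _ H2) !mulr0 subr0; apply: posM; exact: gb_pos.
Qed.

Theorem lemma3p1 (M N m l : nat) :
  (1 <= m)%N -> (m <= l)%N -> (l < N)%N -> (N - l <= M - m)%N ->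
  forall k : nat,
    0 <= (gauss M m * gauss N l - gauss M m.-1 * gauss N l.+1)`_k.
Proof.
case: m => [|m] // Hm Hml HlN HNM k.
rewrite !gauss_gb /=.
have H := @main (M + N) M N m l 0 (leqnn _).
have := H ltac:(lia) ltac:(lia) ltac:(lia) k.
by rewrite /F expr0 mul1r.
Qed.
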